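(* There exist finite alphabets $\Sigma,\Gamma$, a function $f:\Sigma^*\to\Gamma^*$, integers $i,j>0$ and a tier $\tau$ on $\Sigma\cup\Gamma$ such that $f$ is $i,j$-TIOSL on tier $\tau$, but for every $k>0$ and every tier $\upsilon$ on $\Sigma\times\Gamma^*$, $f$ is not $k$-TSSL on tier $\upsilon$.
   Context: Strings: $\lambda$ is the empty string; $\rtimes$ is a boundary symbol not in any alphabet. For $m\ge0$, $\mathrm{suff}^m(x)$ is the string of the last $m$ symbols of $\rtimes^mx$. $\mathrm{lcp}(A)$ is the longest common prefix of a set of strings $A$. For $f:\Sigma^*\to\Gamma^*$: $f^{\gets}(x):=\mathrm{lcp}(\{f(xy)\mid y\in\Sigma^*\})$, and $f^{\to}_x$ is defined by $f(xy)=f^{\gets}(x)f^{\to}_x(y)$. A tier on a (possibly infinite) alphabet $A$ is a homomorphism $\tau:A^*\to A^*$ with $\tau(a)\in\{a,\lambda\}$ for each $a\in A$. Given $i,j>0$ and a tier $\tau$ on $\Sigma\cup\Gamma$, $f$ is $i,j$-TIOSL on $\tau$ if for all $w,x\in\Sigma^*$, $\mathrm{suff}^{i-1}(\tau(w))=\mathrm{suff}^{i-1}(\tau(x))$ and $\mathrm{suff}^{j-1}(\tau(f^{\gets}(w)))=\mathrm{suff}^{j-1}(\tau(f^{\gets}(x)))$ imply $f^{\to}_w=f^{\to}_x$. Actions of $f$: $\mathbb{A}_f:=\{\langle x,y\rangle\in\Sigma\times\Gamma^*\mid\exists z\in\Sigma^*.\ f^{\gets}(zx)=f^{\gets}(z)y\}$,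 written $x:y$. The run $f^{\Leftarrow}(x)$: if $|x|\le1$, $f^{\Leftarrow}(x):=x:f^{\gets}(x)$; if $x=yz$ with $|y|\ge1$, $|z|=1$, then $f^{\Leftarrow}(x):=f^{\Leftarrow}(y)(z:w)$ where $f^{\gets}(x)=f^{\gets}(y)w$. For a tier $\upsilon$ on $\Sigma\times\Gamma^*$ and $k>0$, $f$ is $k$-TSSL on $\upsilon$ if for all $x,y\in\Sigma^*$, $\mathrm{suff}^{k-1}(\upsilon(f^{\Leftarrow}(x)))=\mathrm{suff}^{k-1}(\upsilon(f^{\Leftarrow}(y)))$ implies $f^{\to}_x=f^{\to}_y$. *)

(* Defs.v *)
From mathcomp Require Import all_boot.
From Stdlib Require Import ClassicalEpsilon.

Set Implicit Arguments. Unset Strict Implicit. Unset Printing Implicit Defensive.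

(* suff^m(x): last m symbols of (boundary)^m x; boundary symbol = None. *)
Definition suff (A : Type) (m : nat) (x : seq A) : seq (option A) :=
  drop (size x) (nseq m None ++ map Some x).

Definition is_lcp (A : eqType) (P : seq A -> Prop) (p : seq A) : Prop :=
  (forall s, P s -> prefix p s) /\
  (forall q, (forall s, P s -> prefix q s) -> prefix q p).

Definition lcp (A : eqType) (P : seq A -> Prop) : seq A :=
  epsilon (inhabits [::]) (is_lcp P).

Section Functions.
Variables (Sigma Gamma : finType) (f : seq Sigma -> seq Gamma).

Definition fgets (x : seq Sigma) : seq Gamma :=
  lcp (fun s => exists y, s = f (x ++ y)).

(* f^{->}_x, defined by f(xy) = f^{<-}(x) f^{->}_x(y). *)
Definition fto (x : seq Sigma) (y : seq Sigma) : seq Gamma :=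
  drop (size (fgets x)) (f (x ++ y)).

Definition tier (A : Type) (t : A -> bool) (s : seq A) : seq A := filter t s.

(* The alphabet Sigma u Gamma is modelled as the disjoint sum Sigma + Gamma. *)
Definition TIOSL (i j : nat) (tau : Sigma + Gamma -> bool) : Prop :=
  forall w x : seq Sigma,
    suff i.-1 (tier tau (map inl w)) = suff i.-1 (tier tau (map inl x)) ->
    suff j.-1 (tier tau (map inr (fgets w))) =
      suff j.-1 (tier tau (map inr (fgets x))) ->
    fto w =1 fto x.

(* output of the i-th action of the run on x *)
Definition run_out (x : seq Sigma) (n : nat) : seq Gamma :=
  if n == 0 then fgets (take 1 x)
  else drop (size (fgets (take n x))) (fgets (take n.+1 x)).

(* f^{<=}(x): the run of f on x, a string over Sigma x Gamma^*.
   f^{<=}(a) = a : f^{<-}(a), f^{<=}(yz) = f^{<=}(y) (z : w) with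
   f^{<-}(yz) = f^{<-}(y) w.  The run on the empty input is the empty string. *)
Definition run (x : seq Sigma) : seq (Sigma * seq Gamma) :=
  map (fun p => (p.1, run_out x p.2)) (zip x (iota 0 (size x))).

Definition TSSL (k : nat) (ups : Sigma * seq Gamma -> bool) : Prop :=
  forall x y : seq Sigma,
    suff k.-1 (tier ups (run x)) = suff k.-1 (tier ups (run y)) ->
    fto x =1 fto y.

End Functions.

(* Main.v *)
Require Import Defs.
From mathcomp Require Import all_boot.
From Stdlib Require Import ClassicalEpsilon.

Definition fex (w : seq bool) : seq bool :=
  if false \in w then true :: (if last false w then [:: false] else [::]) else [::].

Lemma prefix_antisym (T : eqType) (s t : seq T) :
  prefix s t -> prefix t s -> s = t.
Proof.
move=> st ts; have e : size s = size t.
  by apply/eqP; rewrite eqn_leq (size_prefix st) (size_prefix ts).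
by move: st; rewrite prefixE e take_size => /eqP.
Qed.

Lemma lcp_unique (A : eqType) (P : seq A -> Prop) p : is_lcp P p -> lcp P = p.
Proof.
move=> H; have [H1 H2] : is_lcp P (lcp P).
  exact: (epsilon_spec (inhabits [::]) (is_lcp P) (ex_intro _ p H)).
case: H => [G1 G2].
by apply: prefix_antisym; [apply: G2 | apply: H2].
Qed.

Lemma fgets_fex w : fgets fex w = if false \in w then [:: true] else [::].
Proof.
apply: lcp_unique; case: ifP => hw; split.
- by move=> s [y ->]; rewrite /fex mem_cat hw /= prefix0s.
- move=> q Hq; have := Hq (fex (w ++ [:: false])) (ex_intro _ _ erefl).
  by rewrite /fex mem_cat hw last_cat.
- by move=> s _; exact: prefix0s.
- move=> q Hq; have := Hq (fex (w ++ [:: true])) (ex_intro _ _ erefl).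
  by rewrite /fex mem_cat hw.
Qed.

Lemma suff_big {A : Type} {m} {s : seq A} :
  m <= size s -> suff m s = map Some (drop (size s - m) s).
Proof.
move=> hm; rewrite /suff drop_cat size_nseq ltnNge hm /=.
by rewrite map_drop.
Qed.

Lemma suff_cat (A : Type) m (p s : seq A) :
  m <= size s -> suff m (p ++ s) = suff m s.
Proof.
move=> hm; have hm' : m <= size (p ++ s) by rewrite size_cat (leq_trans hm) ?leq_addl.
rewrite (suff_big hm') (suff_big hm); congr map.
rewrite drop_cat size_cat ltnNge -addnBA // leq_addr /= addKn //.
Qed.

Lemma suff1_rcons (A : Type) (s : seq A) x : suff 1 (rcons s x) = [:: Some x].
Proof.
rewrite (@suff_big _ 1 (rcons s x)) size_rcons // subn1 /= -cats1 drop_size_cat //.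
Qed.

Lemma tierT (A : Type) (s : seq A) : tier (fun _ => true) s = s.
Proof. by elim: s => //= a s ->. Qed.

Lemma run_nseq_aux (A G : Type) (h : nat -> seq G) k m (a : A) :
  (forall n, m <= n -> h n = [::]) ->
  map (fun p => (p.1, h p.2)) (zip (nseq k a) (iota m k)) = nseq k (a, [::]).
Proof.
elim: k m => //= k IH m H; rewrite H // IH // => n hn; apply: H; exact: ltnW.
Qed.

Lemma tier_nseq (A : Type) (u : A -> bool) k a : u a -> tier u (nseq k a) = nseq k a.
Proof. by move=> ua; elim: k => //= k ->; rewrite ua. Qed.

Theorem proposition18 :
  exists (Sigma Gamma : finType) (f : seq Sigma -> seq Gamma) (i j : nat)
         (tau : Sigma + Gamma -> bool),
    0 < #|Sigma| /\ 0 < #|Gamma| /\ 0 < i /\ 0 < j /\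
    TIOSL f i j tau /\
    (forall (k : nat) (ups : Sigma * seq Gamma -> bool),
        0 < k -> ~ TSSL f k ups).
Proof.
exists bool, bool, fex, 2, 2, (fun _ => true).
do 4 (split; first by rewrite ?card_bool).
split.
- move=> w x; rewrite /= !tierT !fgets_fex => Hin Hout.
  have Ef : (false \in w) = (false \in x).
    by move: Hout; do 2 case: (_ \in _).
  have El : last false w = last false x.
    move: Hin; clear Hout Ef; case/lastP: w => [|w a]; case/lastP: x => [|x b] //;
      rewrite ?map_rcons ?suff1_rcons //.
    by case=> ->; rewrite !last_rcons.
  move=> v; rewrite /fto !fgets_fex Ef /fex !mem_cat Ef !last_cat El //.
- move=> k ups k0 H.
  case U: (ups (true, [::])).
  + pose x1 := false :: nseq k true; pose x2 := nseq k true.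
    have R2 : run fex x2 = nseq k (true, [::]).
      rewrite /run size_nseq; apply: run_nseq_aux => n _.
      have NT : forall m, false \in take m x2 = false.
        by move=> m; apply/negbTE/negP => /mem_take; rewrite mem_nseq andbF.
      by rewrite /run_out !fgets_fex !NT; case: (n == 0).
    have R1 : run fex x1 = (false, [:: true]) :: nseq k (true, [::]).
      rewrite /run /= -/(iota 1 k); congr cons.
        by rewrite /run_out /= fgets_fex.
      rewrite size_nseq; apply: run_nseq_aux => n hn.
      rewrite /run_out; case: n hn => // n _ /=.
      by rewrite !fgets_fex.
    have := H x1 x2.
    rewrite R1 R2 /= tier_nseq //.
    have -> : (if ups (false, [:: true]) then (false, [:: true]) :: nseq k (true, [::])
               else nseq k (true, [::])) =
              (if ups (false, [:: true]) then [:: (false, [:: true])] else [::]) ++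
              nseq k (true, [::]) by case: (ups _).
    rewrite suff_cat ?size_nseq ?leq_pred // => /(_ erefl) /(_ [::]).
    rewrite /fto !fgets_fex /fex /x1 /x2 !cats0 /= !mem_nseq andbF.
    clear x1 x2 R1 R2 H; case: k k0 => // k _ /=.
    suff -> : last true (nseq k true) = true by [].
    by elim: k.
  + have := H [:: false; true] [:: false].
    rewrite /run /= /run_out /= !fgets_fex /= U.
    move=> /(_ erefl) /(_ [::]).
    by rewrite /fto !fgets_fex /fex.
Qed.
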